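(* Let $n \ge 1$ and let $m$ be an even positive integer such that $\Delta_{n,m} \neq \emptyset$, i.e. there exists a positive semidefinite form in $n$ real variables of degree $m$ that is not a sum of squares of forms. Then there does not exist a non-zero form $h \in H_d(\mathbb{R}^n)$ (for any $d$) such that $hp$ is a sum of squares for every $p \in P_{n,m}$.
   Context: $H_d(\mathbb{R}^n)$ denotes the real vector space of real homogeneous forms of degree $d$ in $n$ variables $x_1,\dots,x_n$. For even $m$, $P_{n,m}$ is the set of forms $p \in H_m(\mathbb{R}^n)$ that are positive semidefinite (psd), i.e. $p(x) \ge 0$ for all $x \in \mathbb{R}^n$. A form is a sum of squares (sos) if it can be written as $\sum_k h_k^2$ with each $h_k$ a real polynomial. $\Sigma_{n,m} \subseteq P_{n,m}$ is the set of sos forms in $H_m(\mathbb{R}^n)$, and $\Delta_{n,m} = P_{n,m} \setminus \Sigma_{n,m}$. *)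

(* Defs.v *)
From HB Require Import structures.
From mathcomp Require Import all_boot all_order all_algebra.
From mathcomp Require Import reals.
From mathcomp Require Import mpoly.
Set Implicit Arguments. Unset Strict Implicit. Unset Printing Implicit Defensive.
Import Order.TTheory GRing.Theory Num.Theory.
Local Open Scope ring_scope.

(* Real forms in n variables x_0..x_{n-1}: elements of {mpoly R[n]}, with
   R : realType (the real numbers); p is a form of degree d iff p \is d.-homog
   (total degree, mdeg).  The zero polynomial is a form of every degree. *)

Definition psd (R : realType) (n : nat) (p : {mpoly R[n]}) : Prop :=
  forall x : 'I_n -> R, 0 <= p.@[x].

Definition sos (R : realType) (n : nat) (p : {mpoly R[n]}) : Prop :=
  exists s : seq {mpoly R[n]}, p = \sum_(h <- s) h ^+ 2.

Definition in_P (R : realType) (n m : nat) (p : {mpoly R[n]}) : Prop :=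
  p \is m.-homog /\ psd p.

Definition in_Delta (R : realType) (n m : nat) (p : {mpoly R[n]}) : Prop :=
  in_P m p /\ ~ sos p.

(* Main.v *)
Require Import Defs.
From HB Require Import structures.
From mathcomp Require Import all_boot all_order all_algebra.
From mathcomp Require Import reals.
From mathcomp Require Import mpoly.
From mathcomp Require Import classical_sets boolp topology normedtype derive.
Import Order.TTheory GRing.Theory Num.Theory.
Import numFieldNormedType.Exports.
Local Open Scope ring_scope.
Set Implicit Arguments. Unset Strict Implicit. Unset Printing Implicit Defensive.
Section SOS.
Variables (R : realType) (n : nat).
Implicit Types (p q f g : {mpoly R[n]}) (s : seq {mpoly R[n]}).

Lemma sos0 : sos (0 : {mpoly R[n]}).
Proof. by exists [::]; rewrite big_nil. Qed.

Lemma sosD p q : sos p -> sos q -> sos (p + q).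
Proof. by move=> [s ->] [t ->]; exists (s ++ t); rewrite big_cat. Qed.

Lemma sosZ (c : R) p : 0 <= c -> sos p -> sos (c *: p).
Proof.
move=> c0 [s ->]; exists [seq Num.sqrt c *: h | h <- s].
rewrite big_map scaler_sumr; apply: eq_bigr => h _.
by rewrite exprZn sqr_sqrtr.
Qed.

Lemma sos_rmorph (f : {rmorphism {mpoly R[n]} -> {mpoly R[n]}}) p :
  sos p -> sos (f p).
Proof.
move=> [s ->]; exists [seq f h | h <- s].
by rewrite rmorph_sum big_map; apply: eq_bigr => h _; rewrite rmorphXn.
Qed.

Lemma exists_maxlead s : has (fun h => h != 0) s ->
  exists2 h0, h0 \in s & h0 != 0 /\
    forall h, h \in s -> h != 0 -> (mlead h <= mlead h0)%O.
Proof.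
elim: s => [//|a s IH] /=.
case: (boolP (a != 0)) => [a0 _ | ]; last first.
  rewrite negbK => /eqP -> /= /IH [h0 h0s [h00 hmax]].
  exists h0; first by rewrite inE h0s orbT.
  split=> // h; rewrite inE => /orP [/eqP -> | hs]; first by rewrite eqxx.
  exact: hmax.
case: (boolP (has (fun h => h != 0) s)) => [/IH [h0 h0s [h00 hmax]] | hn].
  case: (leP (mlead a) (mlead h0)) => [ah | ha].
    exists h0; first by rewrite inE h0s orbT.
    split=> // h; rewrite inE => /orP [/eqP -> //| hs]; exact: hmax.
  exists a; first by rewrite inE eqxx.
  split=> // h; rewrite inE => /orP [/eqP -> //| hs] h_0.
  exact: le_trans (hmax _ hs h_0) (ltW ha).
exists a; first by rewrite inE eqxx.
split=> // h; rewrite inE => /orP [/eqP -> //| hs] h_0.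
by move/hasPn: hn => /(_ h hs); rewrite h_0.
Qed.

Lemma sos_lead s : has (fun h => h != 0) s ->
  exists mu : 'X_{1..n}, 0 < (\sum_(h <- s) h ^+ 2)@_(mu + mu) /\
    forall h, h \in s -> h != 0 -> (mlead h <= mu)%O.
Proof.
move=> /exists_maxlead [h0 h0s [h00 hmax]].
exists (mlead h0); split=> //.
have term_ge0 h : h \in s -> 0 <= (h ^+ 2)@_(mlead h0 + mlead h0).
  move=> hs; case: (eqVneq h 0) => [-> | h_0]; first by rewrite expr0n /= mcoeff0.
  case: (eqVneq (mlead h) (mlead h0)) => [eqh | neh].
    by rewrite -eqh expr2 mleadcM -expr2 sqr_ge0.
  have lt : (mlead h < mlead h0)%O by rewrite lt_neqAle neh hmax.
  rewrite mcoeff_gt_mlead ?lexx // expr2 mleadM //.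
  exact: ltm_add.
rewrite raddf_sum /= (big_rem h0 h0s) /=.
apply: (@lt_le_trans _ _ ((h0 ^+ 2)@_(mlead h0 + mlead h0))).
  by rewrite expr2 mleadcM -expr2 exprn_even_gt0 //= mleadc_eq0.
rewrite lerDl big_seq_cond; apply: sumr_ge0 => h /andP [hs _].
exact/term_ge0/(mem_rem hs).
Qed.

Lemma sos_eq0 s : \sum_(h <- s) h ^+ 2 = 0 -> forall h, h \in s -> h = 0.
Proof.
move=> s0 h hs; apply/eqP; apply/negPn/negP => h0.
have /sos_lead [mu [+ _]] : has (fun h => h != 0) s by apply/hasP; exists h.
by rewrite s0 mcoeff0 ltxx.
Qed.

Lemma sos_msize s k : (msize (\sum_(h <- s) h ^+ 2) <= (k + k).+1)%N ->
  forall h, h \in s -> (msize h <= k.+1)%N.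
Proof.
move=> sk h hs.
case: (eqVneq h 0) => [-> | h0]; first by rewrite msize0.
have /sos_lead [mu [mupos mumax]] : has (fun h => h != 0) s by apply/hasP; exists h.
have : (mu + mu)%MM \in msupp (\sum_(h <- s) h ^+ 2).
  by apply/negPn; rewrite -mcoeff_eq0 gt_eqF.
move=> /msize_mdeg_lt /leq_trans /(_ sk); rewrite mdegD ltnS => mk.
rewrite -(mlead_deg h0) ltnS.
apply: leq_trans (lemc_mdeg (mumax _ hs h0)) _.
by rewrite -leq_double -!addnn.
Qed.

Lemma mpolyX_neq0 (b : 'X_{1..n}) : 'X_[b] != 0 :> {mpoly R[n]}.
Proof.
apply/eqP => h; have := congr1 (mcoeff b) h.
by rewrite mcoeffX eqxx mcoeff0 => /eqP; rewrite oner_eq0.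
Qed.

Lemma sos_monomial_pos s (c : R) (b : 'X_{1..n}) :
  \sum_(h <- s) h ^+ 2 = c *: 'X_[b] -> c != 0 -> 0 < c.
Proof.
move=> e c0.
have : has (fun h => h != 0) s.
  case: (boolP (has _ _)) => // /hasPn hn.
  have : \sum_(h <- s) h ^+ 2 = 0.
    rewrite big_seq; apply: big1 => h hs.
    by move: (hn h hs); rewrite negbK => /eqP ->; rewrite expr0n.
  rewrite e => /eqP; rewrite scaler_eq0 (negPf c0) /=.
  by rewrite (negPf (mpolyX_neq0 b)).
move=> /sos_lead [mu [+ _]]; rewrite e mcoeffZ mcoeffX.
by case: eqP => _; rewrite ?mulr1 ?mulr0 ?ltxx.
Qed.
End SOS.

Section Dsub.
Variables (R : realType) (n : nat).
Implicit Types (p q : {mpoly R[n]}) (v u : 'I_n -> R).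

Definition dsub v p := p \mPo [tuple (v i *: 'X_i) | i < n].

Lemma mcoeffE p m : p@_m = \sum_(m' <- msupp p) p@_m' * (m' == m)%:R.
Proof.
rewrite {1}(mpolyE p) (big_morph (mcoeff m) (mcoeffD m) (mcoeff0 _ m)).
by apply: eq_bigr => m' _; rewrite mcoeffZ mcoeffX.
Qed.

Lemma dsubX v m : dsub v 'X_[m] = (\prod_(i < n) v i ^+ m i) *: 'X_[m].
Proof.
rewrite /dsub comp_mpolyX (mpolyXE_id _ m) -scaler_prod.
by apply: eq_bigr => i _; rewrite tnth_mktuple exprZn.
Qed.

Lemma dsub_sum v (I : Type) (r : seq I) (F : I -> {mpoly R[n]}) :
  dsub v (\sum_(i <- r) F i) = \sum_(i <- r) dsub v (F i).
Proof. by rewrite /dsub (big_morph _ (comp_mpolyD _) (comp_mpoly0 _)). Qed.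

Lemma dsub_coef v p m : (dsub v p)@_m = p@_m * \prod_(i < n) v i ^+ m i.
Proof.
rewrite {1}(mpolyE p) dsub_sum (mcoeffE p m) big_distrl /=.
rewrite (big_morph (mcoeff m) (mcoeffD m) (mcoeff0 _ m)).
apply: eq_bigr => m' _; rewrite /dsub comp_mpolyZ -/(dsub v _) dsubX mcoeffZ mcoeffZ mcoeffX.
by case: eqP => [-> | _]; rewrite ?mulr1 ?mulr0 ?mul0r.
Qed.

Lemma dsub_eval v p x : (dsub v p).@[x] = p.@[fun i => v i * x i].
Proof.
rewrite /dsub comp_mpoly_meval; apply: meval_eq => i.
by rewrite tnth_mktuple mevalZ mevalXU.
Qed.

Lemma dsubM v p q : dsub v (p * q) = dsub v p * dsub v q.
Proof. by rewrite /dsub rmorphM. Qed.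

Lemma dsubZ v (c : R) p : dsub v (c *: p) = c *: dsub v p.
Proof. by rewrite /dsub comp_mpolyZ. Qed.

Lemma dsub_comp u v p : dsub u (dsub v p) = dsub (fun i => v i * u i) p.
Proof.
apply/mpolyP => m; rewrite !dsub_coef -mulrA; congr (_ * _).
by rewrite -big_split /=; apply: eq_bigr => i _; rewrite exprMn.
Qed.

Lemma dsub1 p : dsub (fun _ => 1) p = p.
Proof.
apply/mpolyP => m; rewrite dsub_coef big1 ?mulr1 // => i _; exact: expr1n.
Qed.

Lemma sos_dsub v p : sos p -> sos (dsub v p).
Proof. exact: (sos_rmorph (comp_mpoly [tuple (v i *: 'X_i) | i < n])). Qed.

Lemma dsub_homog v d p : p \is d.-homog -> dsub v p \is d.-homog.
Proof.
move=> /dhomogP hp; apply/dhomogP => m hm; apply: hp.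
move: hm; rewrite -[_ \in _]negbK -mcoeff_eq0 dsub_coef mulf_eq0 negb_or => /andP [h _].
by apply/negPn; rewrite -mcoeff_eq0.
Qed.

Lemma dsub_psd v p : psd p -> psd (dsub v p).
Proof. by move=> hp x; rewrite dsub_eval. Qed.

Lemma dsub_inP v m p : in_P m p -> in_P m (dsub v p).
Proof. by move=> [h1 h2]; split; [apply: dsub_homog | apply: dsub_psd]. Qed.

End Dsub.

Section Div.
Variables (R : realType) (n : nat).
Implicit Types (p q h A : {mpoly R[n]}).

Lemma sos_divX (i : 'I_n) A : sos ('X_i ^+ 2 * A) -> sos A.
Proof.
move=> [s e].
pose v := fun j : 'I_n => if j == i then (0 : R) else 1.
have vX : dsub v 'X_i = 0.
  rewrite /dsub comp_mpolyXU -tnth_nth tnth_mktuple /v eqxx scale0r //.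
have hz : forall h, h \in s -> dsub v h = 0.
  have S0 : \sum_(h <- [seq dsub v h | h <- s]) h ^+ 2 = 0.
    rewrite big_map (eq_bigr (fun h => dsub v (h ^+ 2))); last first.
      by move=> h _; rewrite !expr2 dsubM.
    by rewrite -dsub_sum -e dsubM !expr2 dsubM vX !mul0r.
  by move=> h hs; apply: (sos_eq0 S0); exact: map_f.
have hc : forall h, h \in s -> forall m : 'X_{1..n}, m i = 0%N -> h@_m = 0.
  move=> h hs m mi; have := congr1 (mcoeff m) (hz h hs).
  rewrite dsub_coef mcoeff0 big1 ?mulr1 // => j _.
  by rewrite /v; case: eqP => [-> | _]; rewrite ?mi ?expr0 ?expr1n.
pose g h := \sum_(m <- msupp h) h@_m *: ('X_[m - U_(i)] : {mpoly R[n]}).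
have hg : forall h, h \in s -> 'X_i * g h = h.
  move=> h hs; rewrite /g mulr_sumr [RHS]mpolyE big_seq [RHS]big_seq.
  apply: eq_bigr => m hm; rewrite -scalerAr -mpolyXD addmC submK //.
  rewrite lep1mP; apply/negP => /eqP mi.
  by move: hm; rewrite -[_ \in _]negbK -mcoeff_eq0 (hc h hs m mi) eqxx.
exists [seq g h | h <- s].
have X0 : ('X_i : {mpoly R[n]}) ^+ 2 != 0 by rewrite expf_neq0 // mpolyX_neq0.
apply: (mulfI X0); rewrite e big_map mulr_sumr big_seq [RHS]big_seq.
by apply: eq_bigr => h hs; rewrite -exprMn hg.
Qed.

Lemma sos_divXn (i : 'I_n) k A : sos ('X_i ^+ (2 * k) * A) -> sos A.
Proof.
elim: k A => [|k IH] A; first by rewrite muln0 expr0 mul1r.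
by rewrite mulnS exprD -mulrA => /sos_divX /IH.
Qed.

Lemma sos_div_prod (r : seq 'I_n) (k : 'I_n -> nat) A :
  sos ((\prod_(i <- r) 'X_i ^+ (2 * k i)) * A) -> sos A.
Proof.
elim: r A => [|a r IH] A; first by rewrite big_nil mul1r.
by rewrite big_cons -mulrA => /sos_divXn /IH.
Qed.

Lemma sos_div_even (al : 'X_{1..n}) A :
  (forall i, ~~ odd (al i)) -> sos ('X_[al] * A) -> sos A.
Proof.
move=> ev; rewrite mpolyXE_id.
rewrite (eq_bigr (fun i => 'X_i ^+ (2 * (al i)./2))); first exact: sos_div_prod.
by move=> i _; rewrite mul2n -[in LHS](odd_double_half (al i)) (negPf (ev i)) add0n.
Qed.

End Div.

Section Aux.
Variables (R : realType) (n : nat).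
Implicit Types (p q g : {mpoly R[n]}).

Lemma msize_supp p k : (forall m, p@_m != 0 -> (mdeg m < k)%N) -> (msize p <= k)%N.
Proof.
move=> h; rewrite msizeE; apply/bigmax_leqP_seq => m hm _; apply: h.
by rewrite mcoeff_eq0 hm.
Qed.

Lemma msuppE p m : (m \in msupp p) = (p@_m != 0).
Proof. by rewrite mcoeff_eq0 negbK. Qed.

Lemma dsub_eq v u p : v =1 u -> dsub v p = dsub u p.
Proof.
move=> e; apply/mpolyP => m; rewrite !dsub_coef; congr (_ * _).
by apply: eq_bigr => i _; rewrite e.
Qed.

Lemma mul_expand p q k : (msize p <= k)%N -> (msize q <= k)%N ->
  p * q = \sum_(m : 'X_{1..n < k}) \sum_(m' : 'X_{1..n < k})
            (p@_m * q@_m') *: 'X_[m + m'].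
Proof.
move=> hp hq; rewrite {1}(mpolywE hp) {1}(mpolywE hq) mulr_suml.
apply: eq_bigr => m _; rewrite mulr_sumr; apply: eq_bigr => m' _.
by rewrite -scalerAl -scalerAr scalerA mpolyXD.
Qed.

Lemma coef_mul_expand p q k mu : (msize p <= k)%N -> (msize q <= k)%N ->
  (p * q)@_mu = \sum_(m : 'X_{1..n < k}) \sum_(m' : 'X_{1..n < k})
            (p@_m * q@_m') * ((m + m')%MM == mu)%:R.
Proof.
move=> hp hq; rewrite (mul_expand hp hq).
rewrite (big_morph (mcoeff mu) (mcoeffD mu) (mcoeff0 _ mu)); apply: eq_bigr => m _.
rewrite (big_morph (mcoeff mu) (mcoeffD mu) (mcoeff0 _ mu)); apply: eq_bigr => m' _.
by rewrite mcoeffZ mcoeffX.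
Qed.

End Aux.

Section Low.
Variables (R : realType) (n deg : nat).
Implicit Types (p q g : {mpoly R[n]}).

Definition Sg g := forall q, in_P deg q -> sos (g * q).

Definition closedness_prop := forall (G : {mpoly R[n]}) (K : nat),
  (forall eps : R, 0 < eps -> exists F, [/\ sos F, (msize F <= K)%N &
      forall mu, `|F@_mu - G@_mu| <= eps]) -> sos G.

Hypothesis Hcl : closedness_prop.

Lemma low_step g (i : 'I_n) : g != 0 -> Sg g -> exists g',
  [/\ g' != 0, Sg g', (forall m, g'@_m != 0 -> g@_m != 0) &
      exists a, forall m, g'@_m != 0 -> m i = a].
Proof.
move=> g0 Sgg.
have exP : exists a, has (fun m : 'X_{1..n} => m i == a) (msupp g).
  by exists (mlead g i); apply/hasP; exists (mlead g) => //; exact: mlead_supp.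
case: (ex_minnP exP) => a /hasP [m0 m0s /eqP m0a] amin.
have ale : forall m, g@_m != 0 -> (a <= m i)%N.
  by move=> m hm; apply: amin; apply/hasP; exists m => //; rewrite msuppE.
pose low := \sum_(m <- msupp g) (g@_m * (m i == a)%:R) *: ('X_[m] : {mpoly R[n]}).
have lowc : forall mu, low@_mu = g@_mu * (mu i == a)%:R.
  move=> mu; rewrite (big_morph (mcoeff mu) (mcoeffD mu) (mcoeff0 _ mu)).
  rewrite [in RHS]mcoeffE big_distrl /=; apply: eq_bigr => m _.
  rewrite mcoeffZ mcoeffX; case: (eqVneq m mu) => [-> | _]; last by rewrite !mulr0 mul0r.
  by rewrite !mulr1.
exists low; split.
- apply/eqP => h0; have := congr1 (mcoeff m0) h0.
  rewrite lowc m0a eqxx mulr1 mcoeff0 => /eqP; by rewrite mcoeff_eq0 m0s.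
- move=> q qP; apply: (Hcl (K := ((maxn (msize g) (msize q)) + (maxn (msize g) (msize q))).+1)).
  move=> eps eps0.
  set K := maxn (msize g) (msize q).
  have gK : (msize g <= K)%N by rewrite leq_maxl.
  have qK : (msize q <= K)%N by rewrite leq_maxr.
  pose C := \sum_(m : 'X_{1..n < K}) \sum_(m' : 'X_{1..n < K}) `|g@_m| * `|q@_m'|.
  have C0 : 0 <= C by apply: sumr_ge0 => m _; apply: sumr_ge0 => m' _; rewrite mulr_ge0.
  pose t := Num.min 1 (eps / (C + 1)).
  have t0 : 0 < t by rewrite lt_min ltr01 divr_gt0 // ltr_wpDl.
  have t1 : t <= 1 by rewrite ge_min lexx.
  have tC : t * C <= eps.
    apply: (@le_trans _ _ (eps / (C + 1) * C)); first by rewrite ler_wpM2r // ge_min lexx orbT.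
    by rewrite -mulrA ler_piMr ?ltW // mulrC ltr_pdivrMr ?ltr_wpDl // mul1r ltrDl ltr01.
  pose vt := fun j : 'I_n => if j == i then t else 1.
  pose ut := fun j : 'I_n => if j == i then t^-1 else 1.
  pose gt := t ^- a *: dsub vt g.
  have gtc : forall m, gt@_m = g@_m * (t ^- a * t ^+ m i).
    move=> m; rewrite mcoeffZ dsub_coef (bigD1 i) //= big1 => [|j ji].
      by rewrite /vt eqxx mulr1 mulrCA.
    by rewrite /vt (negPf ji) expr1n.
  exists (gt * q); split.
  + have e1 : dsub (fun j => ut j * vt j) q = q.
      rewrite (@dsub_eq _ _ _ (fun _ => 1)) ?dsub1 // => j.
      by rewrite /ut /vt; case: eqP => _; rewrite ?mulVf ?gt_eqF ?mulr1.
    have := Sgg _ (dsub_inP ut qP) => /(sos_dsub vt).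
    rewrite dsubM dsub_comp e1.
    have ta0 : 0 <= t ^- a by rewrite invr_ge0 exprn_ge0 // ltW.
    by move=> /(sosZ ta0); rewrite scalerAl.
  + apply: (leq_trans (msizeM_le _ _)); rewrite ltnS; apply: leq_add qK.
    apply: (leq_trans _ gK); apply: msize_supp => m; rewrite gtc mulf_eq0 negb_or.
    by case/andP => hm _; apply: msize_mdeg_lt; rewrite msuppE.
  + move=> mu; rewrite -mcoeffB -mulrBl.
    set D := gt - low.
    have Dc : forall m, `|D@_m| <= t * `|g@_m|.
      move=> m; rewrite mcoeffB gtc lowc -mulrBr normrM mulrC.
      case: (eqVneq (g@_m) 0) => [-> | hm]; first by rewrite normr0 !mulr0.
      rewrite ler_wpM2r //.
      have am := ale m hm.
      have -> : t ^- a * t ^+ m i = t ^+ (m i - a).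
        by rewrite -{1}(subnK am) exprD mulrC mulrK // unitfE expf_neq0 // gt_eqF.
      case: (eqVneq (m i) a) => [-> | ne]; first by rewrite subnn expr0 subrr normr0 ltW.
      rewrite subr0 ger0_norm; last by apply: exprn_ge0; exact: ltW.
      have : (0 < m i - a)%N by rewrite subn_gt0 ltn_neqAle eq_sym ne am.
      case: (m i - a)%N => // k _; rewrite exprS; apply: (@le_trans _ _ (t * 1)); last by rewrite mulr1.
      by apply: ler_wpM2l; [exact: ltW | exact: exprn_ile1 (ltW t0) t1].
    have DK : (msize D <= K)%N.
      apply: (leq_trans _ gK); apply: msize_supp => m.
      rewrite /D mcoeffB gtc lowc -mulrBr mulf_eq0 negb_or => /andP [hm _].
      by apply: msize_mdeg_lt; rewrite msuppE.
    rewrite (coef_mul_expand mu DK qK).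
    apply: le_trans (ler_norm_sum _ _ _) _; apply: le_trans tC.
    rewrite /C mulr_sumr; apply: ler_sum => m _.
    apply: le_trans (ler_norm_sum _ _ _) _; rewrite mulr_sumr; apply: ler_sum => m' _.
    rewrite !normrM mulrA; apply: (@le_trans _ _ (`|D@_m| * `|q@_m'|)).
      rewrite -[X in _ <= X]mulr1 ler_wpM2l ?mulr_ge0 //.
      by case: eqP; rewrite ?normr1 ?normr0.
    by rewrite ler_wpM2r.
- by move=> m; rewrite lowc mulf_eq0 negb_or => /andP [].
- exists a => m; rewrite lowc mulf_eq0 negb_or => /andP [_].
  by apply: contraNeq => ne; rewrite (negPf ne).
Qed.
End Low.

Section Final.
Variables (R : realType) (n deg : nat).
Implicit Types (p q g : {mpoly R[n]}).
Hypothesis Hcl : closedness_prop R n.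

Lemma low_iter g k : (k <= n)%N -> g != 0 -> Sg deg g -> exists g',
  [/\ g' != 0, Sg deg g' &
      forall i : 'I_n, (i < k)%N -> exists a, forall m, g'@_m != 0 -> m i = a].
Proof.
move=> + g0 Sgg; elim: k => [_ | k IH kn].
  by exists g; split=> // i.
have [g1 [g10 Sg1 h1]] := IH (ltnW kn).
have [g2 [g20 Sg2 sub2 [a ha]]] := low_step Hcl (Ordinal kn) g10 Sg1.
exists g2; split=> // i; rewrite ltnS leq_eqVlt => /orP [/eqP ik | ik].
  have -> : i = Ordinal kn by apply: val_inj.
  by exists a.
have [b hb] := h1 i ik; exists b => m hm; exact: hb m (sub2 m hm).
Qed.

Lemma monomial_of g : g != 0 ->
  (forall i : 'I_n, exists a, forall m, g@_m != 0 -> m i = a) ->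
  g = mleadc g *: 'X_[mlead g].
Proof.
move=> g0 H.
have hal : g@_(mlead g) != 0 by rewrite -msuppE mlead_supp.
have eqal : forall m, g@_m != 0 -> m = mlead g.
  move=> m hm; apply/mnmP => i; have [a ha] := H i.
  by rewrite (ha m hm) (ha _ hal).
apply/mpolyP => mu; rewrite mcoeffZ mcoeffX.
case: (eqVneq (mlead g) mu) => [-> | ne]; first by rewrite mulr1.
rewrite mulr0; apply/eqP; apply/negPn/negP => hmu.
by move: ne; rewrite (eqal _ hmu) eqxx.
Qed.

Lemma main_alg : (0 < n)%N -> ~~ odd deg ->
  (exists p : {mpoly R[n]}, in_Delta deg p) ->
  ~ (exists (d : nat) (h : {mpoly R[n]}),
        h \is d.-homog /\ h != 0 /\
        forall p : {mpoly R[n]}, in_P deg p -> sos (h * p)).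
Proof.
move=> n0 degev [p0 [p0P p0ns]] [d [h [_ [h0 Sh]]]].
have [g [g0 Sgg hg]] := low_iter (leqnn n) h0 Sh.
have gE := monomial_of g0 (fun i => hg i (ltn_ord i)).
set c := mleadc g in gE; set al := mlead g in gE.
have c0 : c != 0 by rewrite /c mleadc_eq0.
pose i0 : 'I_n := Ordinal n0.
have q1P : in_P deg ('X_i0 ^+ deg : {mpoly R[n]}).
  split.
    have := @dhomogMn _ _ mdeg 1 ('X_i0) deg.
    by rewrite mul1n; apply; rewrite dhomogX; apply/eqP; exact: mdeg1.
  by move=> x; rewrite rmorphXn /= mevalXU exprn_even_ge0.
have cpos : 0 < c.
  have := Sgg _ q1P; rewrite gE -scalerAl mpolyXn -mpolyXD => -[s e].
  exact: sos_monomial_pos (esym e) c0.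
case: (boolP [forall i : 'I_n, ~~ odd (al i)]) => [/forallP ev | ].
  have := Sgg _ p0P; rewrite gE -scalerAl scalerAr => /(sos_div_even ev).
  have ci : 0 <= c^-1 by rewrite invr_ge0 ltW.
  by move=> /(sosZ ci); rewrite scalerA mulVf // scale1r.
rewrite negb_forall => /existsP [i]; rewrite negbK => oddi.
pose v := fun j : 'I_n => if j == i then (-1 : R) else 1.
have dg : dsub v g = - g.
  rewrite gE dsubZ dsubX scalerA (bigD1 i) //= big1 => [|j ji]; last first.
    by rewrite /v (negPf ji) expr1n.
  by rewrite /v eqxx mulr1 -signr_odd oddi expr1 mulrN1 scaleNr.
have e2 : dsub v (dsub v p0) = p0.
  rewrite dsub_comp (@dsub_eq _ _ _ (fun _ => 1)) ?dsub1 // => j.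
  by rewrite /v; case: eqP => _; rewrite ?mulrNN mulr1.
have [s1 e1] := Sgg _ p0P.
have := Sgg _ (dsub_inP v p0P) => /(sos_dsub v); rewrite dsubM dg e2 => -[s2 es2].
have S0 : \sum_(h <- s1 ++ s2) h ^+ 2 = 0 by rewrite big_cat /= -e1 -es2 mulNr subrr.
have gp0 : g * p0 = 0.
  rewrite e1 big_seq big1 // => f hs.
  by rewrite (sos_eq0 S0 (h := f)) ?expr0n // mem_cat hs.
apply: p0ns; move/eqP: gp0; rewrite mulf_eq0 (negPf g0) /= => /eqP ->.
exact: sos0.
Qed.
End Final.

Section Carath.
Variables (R : realType) (n : nat).
Implicit Types (p q f g : {mpoly R[n]}).

Lemma sq_msize f k : (msize f <= k.+1)%N -> (msize (f ^+ 2) <= (k + k).+1)%N.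
Proof.
case: (eqVneq f 0) => [-> | f0]; first by rewrite expr0n /= msize0.
move=> fk; rewrite expr2 msizeM //.
have := leq_add fk fk; rewrite addSn addnS; by case: (msize f + msize f)%N.
Qed.

Lemma exists_argmax (T : finType) (F : T -> R) (t0 : T) :
  exists t, forall t', F t' <= F t.
Proof.
case: (@arg_maxP _ _ T t0 xpredT F erefl) => t _ ht.
by exists t => t'; apply: ht.
Qed.

Lemma pad_sum L M (f : 'I_L -> {mpoly R[n]}) : (L <= M)%N ->
  exists g : 'I_M -> {mpoly R[n]}, (forall j, g j = 0 \/ exists j', g j = f j') /\
    \sum_(j < L) f j ^+ 2 = \sum_(j < M) g j ^+ 2.
Proof.
move=> LM.
pose G := fun x : nat => if (insub x : option 'I_L) is Some j' then f j' else 0.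
exists (fun j : 'I_M => G j); split.
  by move=> j; rewrite /G; case: insub => [j'|]; [right; exists j' | left].
rewrite (eq_bigr (fun j : 'I_L => G j ^+ 2)); last first.
  by move=> j _; rewrite /G valK.
rewrite (big_ord_widen M (fun x => G x ^+ 2) LM) /=.
rewrite [RHS](bigID (fun j : 'I_M => (j < L)%N)) /= [X in _ = _ + X]big1 ?addr0 //.
move=> j; rewrite -leqNgt => Lj; by rewrite /G insubF ?expr0n // ltnNge Lj.
Qed.

Variable k : nat.
Let T2 := 'X_{1..n < (k + k).+1}.
Definition Mc := #|{: T2}|.+1.

Lemma caratheodory L (f : 'I_L -> {mpoly R[n]}) :
  (forall j, msize (f j) <= k.+1)%N ->
  exists g : 'I_Mc -> {mpoly R[n]}, (forall j, msize (g j) <= k.+1)%N /\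
    \sum_(j < L) f j ^+ 2 = \sum_(j < Mc) g j ^+ 2.
Proof.
elim: L f => [|L IH] f fk.
  exists (fun _ => 0); split=> [j|]; first by rewrite msize0.
  by rewrite big_ord0 big1 // => j _; rewrite expr0n.
case: (ltnP L.+1 Mc) => [lt | ge].
  have [g [gf ge]] := pad_sum f (ltnW lt); exists g; split => // j.
  by case: (gf j) => [-> | [j' ->]]; rewrite ?msize0.
pose A := \matrix_(j < L.+1, r < #|{: T2}|) ((f j ^+ 2)@_(enum_val r : T2)).
have rk : (0 < \rank (kermx A))%N.
  by rewrite mxrank_ker subn_gt0; apply: leq_ltn_trans (rank_leq_col A) _.
have /existsP [r0 hr0] : [exists r0, row r0 (kermx A) != 0].
  rewrite -negb_forall; apply/negP => /forallP H.
  move: rk; rewrite lt0n mxrank_eq0 => /negP; apply.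
  apply/eqP/row_matrixP => r; rewrite row0; exact/eqP/H.
set lam := row r0 (kermx A) in hr0.
have lamA : lam *m A = 0 by rewrite /lam -row_mul mulmx_ker row0.
have /existsP [j0 hj0] : [exists j0, lam 0 j0 != 0].
  rewrite -negb_forall; apply: contra hr0 => /forallP H.
  apply/eqP/rowP => j; rewrite [RHS]mxE; exact/eqP/H.
pose s : R := if 0 < lam 0 j0 then 1 else -1.
pose lam' := s *: lam.
have lamA' : lam' *m A = 0 by rewrite /lam' -scalemxAl lamA scaler0.
have lj0 : 0 < lam' 0 j0.
  rewrite /lam' mxE /s; case: ifP => [h | ]; first by rewrite mul1r.
  by move/negbT; rewrite -leNgt le_eqVlt (negPf hj0) /= mulN1r oppr_gt0.
have [jm hjm] := exists_argmax (fun j => lam' 0 j) j0.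
set lm := lam' 0 jm.
have lm0 : 0 < lm by apply: lt_le_trans lj0 (hjm j0).
pose mu := fun j => 1 - lam' 0 j / lm.
have mu0 : forall j, 0 <= mu j.
  by move=> j; rewrite /mu subr_ge0 ler_pdivrMr // mul1r; exact: hjm.
have mujm : mu jm = 0 by rewrite /mu divff ?gt_eqF // subrr.
have sum0 : \sum_(j < L.+1) lam' 0 j *: f j ^+ 2 = 0.
  apply/mpolyP => m; rewrite mcoeff0 (big_morph (mcoeff m) (mcoeffD m) (mcoeff0 _ m)).
  case: (ltnP (mdeg m) (k + k).+1) => [mk | mk].
    have := congr1 (fun M : 'M[R]_(1, #|{: T2}|) => M 0 (enum_rank (BMultinom mk : T2))) lamA'.
    rewrite !mxE => E; rewrite -[RHS]E; apply: eq_bigr => j _.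
    by rewrite mcoeffZ !mxE enum_rankK.
  apply: big1 => j _; rewrite mcoeffZ memN_msupp_eq0 ?mulr0 //.
  apply: msize_mdeg_ge; apply: leq_trans mk; exact: sq_msize.
pose f' := fun j => Num.sqrt (mu j) *: f j.
have ef' : \sum_(j < L.+1) f j ^+ 2 = \sum_(j < L.+1) f' j ^+ 2.
  have -> : \sum_(j < L.+1) f' j ^+ 2 =
      \sum_(j < L.+1) f j ^+ 2 - lm^-1 *: \sum_(j < L.+1) lam' 0 j *: f j ^+ 2.
    rewrite scaler_sumr -sumrB; apply: eq_bigr => j _.
    rewrite /f' exprZn sqr_sqrtr // /mu scalerBl scale1r scalerA mulrC.
    by rewrite mulrC.
  by rewrite sum0 scaler0 subr0.
have [g [gk eg]] := IH (fun j => f' (lift jm j)) (fun j => leq_trans (msizeZ_le _ _) (fk _)).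
exists g; split=> //; rewrite ef' (bigD1_ord jm (P := xpredT)) //= -eg.
by rewrite /f' mujm sqrtr0 scale0r expr0n /= add0r.
Qed.

End Carath.

Local Open Scope classical_set_scope.
Local Open Scope ring_scope.

Section Cont.
Variables (R : realType) (P : nat).
Implicit Types (F G : 'rV[R]_P -> R).

Lemma cont_cst (a : R) : continuous (fun _ : 'rV[R]_P => a).
Proof. exact: cst_continuous. Qed.

Lemma cont_coord (i : 'I_P) : continuous (fun c : 'rV[R]_P => c 0 i).
Proof. exact: (@coord_continuous R 1 P 0 i). Qed.

Lemma cont_add F G : continuous F -> continuous G -> continuous (fun c => F c + G c).
Proof. move=> hF hG x; exact: (continuousD (hF x) (hG x)). Qed.

Lemma cont_mul F G : continuous F -> continuous G -> continuous (fun c => F c * G c).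
Proof. move=> hF hG x; exact: (continuousM (hF x) (hG x)). Qed.

Lemma cont_opp F : continuous F -> continuous (fun c => - F c).
Proof. move=> hF x; exact: (continuousN (hF x)). Qed.

Lemma cont_norm F : continuous F -> continuous (fun c => `|F c|).
Proof. by move=> hF x; apply: continuous_comp; [exact: hF | exact: norm_continuous]. Qed.

Lemma cont_sum (I : Type) (r : seq I) (H : I -> 'rV[R]_P -> R) :
  (forall i, continuous (H i)) -> continuous (fun c => \sum_(i <- r) H i c).
Proof.
move=> hH; elim: r => [|a r IH].
  have -> : (fun c : 'rV[R]_P => \sum_(i <- [::]) H i c) = (fun _ => 0).
    by apply: funext => c; rewrite big_nil.
  exact: cont_cst.
have -> : (fun c : 'rV[R]_P => \sum_(i <- a :: r) H i c) = (fun c => H a c + \sum_(i <- r) H i c).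
  by apply: funext => c; rewrite big_cons.
exact: cont_add.
Qed.
End Cont.


Lemma abs_le_sq (R : rcfType) (x b : R) : x ^+ 2 <= b -> `|x| <= Num.sqrt b.
Proof. move=> h; rewrite -sqrtr_sqr; exact: ler_wsqrtr. Qed.

Section Closed.
Variables (R : realType) (n k : nat).
Local Notation T1 := ('X_{1..n < k.+1}).
Local Notation T2 := ('X_{1..n < (k + k).+1}).
Local Notation M := (Mc n k).
Local Notation I := (prod 'I_M T1).
Local Notation P := #|{: I}|.

Definition polyj (c : 'rV[R]_P) (j : 'I_M) : {mpoly R[n]} :=
  \sum_(t : T1) c 0 (enum_rank ((j, t) : I)) *: 'X_[t].

Definition Phi (c : 'rV[R]_P) := \sum_(j < M) polyj c j ^+ 2.

Lemma coefPhi c mu : (Phi c)@_mu = \sum_(j < M) \sum_(t : T1) \sum_(t' : T1)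
  (c 0 (enum_rank ((j, t) : I)) * c 0 (enum_rank ((j, t') : I))) *
     (((t : 'X_{1..n}) + t')%MM == mu)%:R.
Proof.
rewrite (big_morph (mcoeff mu) (mcoeffD mu) (mcoeff0 _ mu)); apply: eq_bigr => j _.
rewrite expr2 {1}/polyj mulr_suml.
rewrite (big_morph (mcoeff mu) (mcoeffD mu) (mcoeff0 _ mu)); apply: eq_bigr => t _.
rewrite /polyj mulr_sumr.
rewrite (big_morph (mcoeff mu) (mcoeffD mu) (mcoeff0 _ mu)); apply: eq_bigr => t' _.
by rewrite -scalerAl -scalerAr scalerA -mpolyXD mcoeffZ mcoeffX.
Qed.

Lemma coefPhi_out c mu : ((k + k).+1 <= mdeg mu)%N -> (Phi c)@_mu = 0.
Proof.
move=> hmu; rewrite coefPhi big1 // => j _; rewrite big1 // => t _; rewrite big1 // => t' _.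
case: eqP => [e | _]; last by rewrite mulr0.
have := bmdeg t; have := bmdeg t'; rewrite -e mdegD in hmu.
move: hmu; rewrite ltnS => hmu h1 h2.
have := leq_add (ltnSE h2) (ltnSE h1); rewrite leqNgt => /negP; case.
by apply: leq_trans hmu.
Qed.

Lemma Phi_cont mu : continuous (fun c : 'rV[R]_P => (Phi c)@_mu).
Proof.
have -> : (fun c : 'rV[R]_P => (Phi c)@_mu) = (fun c => \sum_(j < M) \sum_(t : T1) \sum_(t' : T1)
  (c 0 (enum_rank ((j, t) : I)) * c 0 (enum_rank ((j, t') : I))) *
     (((t : 'X_{1..n}) + t')%MM == mu)%:R).
  by apply: funext => c; rewrite coefPhi.
apply: cont_sum => j; apply: cont_sum => t; apply: cont_sum => t'.
apply: cont_mul; last exact: cont_cst.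
by apply: cont_mul; exact: cont_coord.
Qed.

Lemma polyj_coef c j (t : T1) : (polyj c j)@_t = c 0 (enum_rank ((j, t) : I)).
Proof.
rewrite (big_morph (mcoeff _) (mcoeffD _) (mcoeff0 _ _)) (bigD1 t) //= big1.
  by rewrite mcoeffZ mcoeffX eqxx mulr1 addr0.
by move=> t' ne; rewrite mcoeffZ mcoeffX val_eqE (negPf ne) mulr0.
Qed.

Lemma Phi_sos c : sos (Phi c).
Proof. by exists [seq polyj c j | j <- enum 'I_M]; rewrite big_map big_enum. Qed.


Lemma rep F : sos F -> (msize F <= k)%N -> exists c, F = Phi c.
Proof.
move=> [s e] Fk.
have sk : forall h, h \in s -> (msize h <= k.+1)%N.
  apply: sos_msize; rewrite -e; apply: (leq_trans Fk); apply: leqW; exact: leq_addr.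
pose f := fun j : 'I_(size s) => nth 0 s j.
have ef : F = \sum_(j < size s) f j ^+ 2.
  by rewrite e (big_nth 0) big_mkord.
have fk : forall j, (msize (f j) <= k.+1)%N by move=> j; apply: sk; exact: mem_nth.
have [g [gk eg]] := caratheodory fk.
pose c := \row_(r < P) ((g (enum_val r).1)@_((enum_val r).2)).
exists c; rewrite ef eg /Phi; apply: eq_bigr => j _; congr (_ ^+ 2).
rewrite [LHS](mpolywE (gk j)) /polyj; apply: eq_bigr => t _.
by rewrite mxE enum_rankK.
Qed.

Lemma polyjZ a c j : polyj (a *: c) j = a *: polyj c j.
Proof.
by rewrite /polyj scaler_sumr; apply: eq_bigr => t _; rewrite mxE scalerA.
Qed.

Lemma PhiZ a c : Phi (a *: c) = a ^+ 2 *: Phi c.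
Proof.
by rewrite /Phi scaler_sumr; apply: eq_bigr => j _; rewrite polyjZ exprZn.
Qed.

Lemma Phi0 c : Phi c = 0 -> c = 0.
Proof.
move=> h.
have S0 : \sum_(p <- [seq polyj c j | j <- enum 'I_M]) p ^+ 2 = 0.
  by rewrite big_map big_enum.
apply/rowP => r; rewrite mxE.
have := polyj_coef c (enum_val r).1 (enum_val r).2.
rewrite -surjective_pairing enum_valK => <-.
by rewrite (sos_eq0 S0 (h := polyj c (enum_val r).1)) ?mcoeff0 // map_f // mem_enum.
Qed.

Definition Nc (c : 'rV[R]_P) := \sum_(r < P) c 0 r ^+ 2.
Definition psi (c : 'rV[R]_P) := \sum_(mu : T2) `|(Phi c)@_mu|.

Lemma Nc_cont : continuous Nc.
Proof.
have -> : Nc = (fun c => \sum_(r < P) c 0 r * c 0 r).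
  by apply: funext => c; apply: eq_bigr => r _; rewrite expr2.
by apply: cont_sum => r; apply: cont_mul; exact: cont_coord.
Qed.

Lemma psi_cont : continuous psi.
Proof. by apply: cont_sum => mu; apply: cont_norm; exact: Phi_cont. Qed.

Lemma NcZ a c : Nc (a *: c) = a ^+ 2 * Nc c.
Proof. by rewrite /Nc mulr_sumr; apply: eq_bigr => r _; rewrite mxE exprMn. Qed.

Lemma psiZ a c : psi (a *: c) = a ^+ 2 * psi c.
Proof.
rewrite /psi mulr_sumr; apply: eq_bigr => mu _.
by rewrite PhiZ mcoeffZ normrM ger0_norm // sqr_ge0.
Qed.

Lemma psi_ge0 c : 0 <= psi c.
Proof. by apply: sumr_ge0 => mu _; exact: normr_ge0. Qed.

Lemma Nc_ge0 c : 0 <= Nc c.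
Proof. by apply: sumr_ge0 => r _; exact: sqr_ge0. Qed.

Lemma psi0 c : psi c = 0 -> Phi c = 0.
Proof.
move=> /eqP; rewrite psumr_eq0 => [/allP H|mu _]; last exact: normr_ge0.
apply/mpolyP => mu; rewrite mcoeff0.
case: (ltnP (mdeg mu) (k + k).+1) => [mk | mk]; last exact: coefPhi_out.
have := H (BMultinom mk); rewrite mem_index_enum /= normr_eq0 => /(_ isT) /eqP.
by [].
Qed.

Lemma coord_le_Nc (c : 'rV[R]_P) r : c 0 r ^+ 2 <= Nc c.
Proof.
rewrite /Nc (bigD1 r) //= lerDl; apply: sumr_ge0 => r' _; exact: sqr_ge0.
Qed.

Lemma P_pos : exists r0 : 'I_P, True.
Proof.
have t0 : (mdeg (0%MM : 'X_{1..n}) < k.+1)%N by rewrite mdeg0.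
exists (enum_rank ((ord0 : 'I_M), (BMultinom t0 : T1))); done.
Qed.

Lemma delta_bound : exists2 d : R, 0 < d & forall c, d * Nc c <= psi c.
Proof.
pose S := [set c : 'rV[R]_P | Nc c = 1].
have [r0 _] := P_pos.
have S0 : S !=set0.
  exists (\row_(r < P) (r == r0)%:R); rewrite /S /= /Nc (bigD1 r0) //= big1.
    by rewrite mxE eqxx expr1n addr0.
  by move=> r ne; rewrite mxE (negPf ne) expr0n.
have cbox : compact [set v : 'rV[R]_P | forall i, v 0 i \in `[(-1 : R), 1]].
  apply: (@rV_compact _ _ (fun=> `[(-1 : R), 1]%classic)) => _.
  exact: segment_compact.
have cS : compact S.
  apply: (subclosed_compact _ cbox).
  - have -> : S = Nc @^-1` [set x | x = 1] by [].
    apply: preimage_closed; last exact: closed_eq.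
    by move=> x _; exact: Nc_cont.
  - move=> c /= Sc i; rewrite in_itv /= -ler_norml.
    have := coord_le_Nc c i; rewrite Sc.
    by move=> /abs_le_sq; rewrite sqrtr1.
have [c0 c0S c0min] := compact_EVT_min S0 cS (continuous_subspaceT psi_cont).
have c0N : Nc c0 = 1 by move: c0S; rewrite inE.
exists (psi c0).
  rewrite lt_neqAle psi_ge0 andbT eq_sym; apply/eqP => /psi0 /Phi0 e.
  by move: c0N; rewrite e /Nc big1 => [/eqP|r _]; rewrite ?mxE ?expr0n // eq_sym oner_eq0.
move=> c.
case: (eqVneq (Nc c) 0) => [-> | Nc0]; first by rewrite mulr0 psi_ge0.
have Npos : 0 < Nc c by rewrite lt_neqAle eq_sym Nc0 Nc_ge0.
set a := Num.sqrt (Nc c).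
have a0 : 0 < a by rewrite sqrtr_gt0.
have a2 : a ^+ 2 = Nc c by rewrite sqr_sqrtr // ltW.
have cS' : (a^-1 *: c) \in S.
  by rewrite inE /S /= NcZ exprVn a2 mulVf.
have -> : c = a *: (a^-1 *: c) by rewrite scalerA divff ?gt_eqF // scale1r.
rewrite psiZ NcZ.
have -> : Nc (a^-1 *: c) = 1 by move: cS'; rewrite inE.
rewrite mulr1 mulrC; apply: ler_wpM2l; [exact: sqr_ge0 | exact: c0min].
Qed.

Lemma le0_eps (x : R) : (forall e, 0 < e -> x <= e) -> x <= 0.
Proof.
move=> h; rewrite leNgt; apply/negP => x0.
have := h (x / 2) (divr_gt0 x0 (ltr0n _ 2)).
by rewrite ler_pdivlMr // mulr_natr mulr2n gerDl leNgt x0.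
Qed.

Lemma closed_main (G : {mpoly R[n]}) :
  (forall eps : R, 0 < eps -> exists F, [/\ sos F, (msize F <= k)%N &
      forall mu, `|F@_mu - G@_mu| <= eps]) -> sos G.
Proof.
move=> H.
have [d d0 hd] := delta_bound.
pose C := \sum_(mu : T2) (`|G@_mu| + 1).
pose B := Num.sqrt (C / d).
pose Kb := [set v : 'rV[R]_P | forall i, v 0 i \in `[- B, B]].
have cK : compact Kb.
  apply: (@rV_compact _ _ (fun=> `[- B, B]%classic)) => _; exact: segment_compact.
have K0 : Kb !=set0.
  by exists 0 => i; rewrite mxE in_itv /= oppr_le0 sqrtr_ge0.
pose E := fun c : 'rV[R]_P => \sum_(mu : T2) `|(Phi c)@_mu - G@_mu|.
have Econt : continuous E.
  apply: cont_sum => mu; apply: cont_norm; apply: cont_add; first exact: Phi_cont.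
  exact: cont_cst.
have [c1 c1K c1min] := compact_EVT_min K0 cK (continuous_subspaceT Econt).
pose N2 : R := \sum_(mu : T2) 1.
have N20 : 0 <= N2 by apply: sumr_ge0.
have E1 : E c1 <= 0.
  apply: le0_eps => e e0.
  pose e' := Num.min 1 (e / (N2 + 1)).
  have e'0 : 0 < e' by rewrite lt_min ltr01 divr_gt0 // ltr_wpDl.
  have e'1 : e' <= 1 by rewrite ge_min lexx.
  have [F [sF Fk hF]] := H e' e'0.
  have [c hc] := rep sF Fk.
  have cK1 : c \in Kb.
    rewrite inE /Kb /= => i; rewrite in_itv /= -ler_norml.
    apply: abs_le_sq; apply: (le_trans (coord_le_Nc c i)).
    rewrite ler_pdivlMr // mulrC; apply: (le_trans (hd c)).
    rewrite /psi -hc; apply: ler_sum => mu _.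
    have h := hF mu; rewrite -[F@_mu](subrK G@_mu).
    apply: (le_trans (ler_normD _ _)); rewrite addrC lerD2l.
    exact: le_trans h e'1.
  apply: (le_trans (c1min _ cK1)).
  rewrite /E -hc; apply: (@le_trans _ _ (\sum_(mu : T2) e')); first exact: ler_sum.
  rewrite (eq_bigr (fun _ => e' * 1)) => [|mu _]; last by rewrite mulr1.
  rewrite -mulr_sumr -/N2 mulrC.
  apply: (@le_trans _ _ (N2 * (e / (N2 + 1)))).
    by apply: ler_wpM2l => //; rewrite ge_min lexx orbT.
  rewrite mulrA ler_pdivrMr ?ltr_wpDl // [X in _ <= X]mulrC.
  by apply: ler_wpM2r; [exact: ltW | rewrite lerDl].
have Eterm : forall mu : T2, (Phi c1)@_mu = G@_mu.
  move=> mu; apply/eqP; rewrite -subr_eq0 -normr_eq0 eq_le normr_ge0 andbT.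
  apply: le_trans E1; rewrite /E (bigD1 mu) //= lerDl.
  by apply: sumr_ge0 => mu' _; exact: normr_ge0.
have Gout : forall mu : 'X_{1..n}, ((k + k).+1 <= mdeg mu)%N -> G@_mu = 0.
  move=> mu hmu; apply/eqP; rewrite -normr_eq0 eq_le normr_ge0 andbT.
  apply: le0_eps => e e0; have [F [_ Fk hF]] := H e e0.
  have : F@_mu = 0.
    apply: memN_msupp_eq0; apply: msize_mdeg_ge.
    apply: (leq_trans Fk); apply: leq_trans hmu; apply: leqW; exact: leq_addr.
  by move=> F0; move: (hF mu); rewrite F0 sub0r normrN.
have -> : G = Phi c1.
  apply/mpolyP => mu.
  case: (ltnP (mdeg mu) (k + k).+1) => [mk | mk].
    exact: (esym (Eterm (BMultinom mk))).
  by rewrite Gout // coefPhi_out.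
exact: Phi_sos.
Qed.

End Closed.

Lemma closedness (R : realType) (n : nat) : closedness_prop R n.
Proof. by move=> G K H; apply: (@closed_main R n K G). Qed.


Theorem theorem1 (R : realType) (n m : nat) :
  (1 <= n)%N -> (0 < m)%N -> ~~ odd m ->
  (exists p : {mpoly R[n]}, in_Delta m p) ->
  ~ (exists (d : nat) (h : {mpoly R[n]}),
        h \is d.-homog /\ h != 0 /\
        forall p : {mpoly R[n]}, in_P m p -> sos (h * p)).
Proof.
move=> hn _ hodd; exact: (@main_alg R n m (@closedness R n) hn hodd).
Qed.
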